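(* Let $N_a\ge N$, $N$ even, $M$ odd with $M\le N-M$, and $U>0$. Let $\theta(x)=-2\tan^{-1}(2x/U)$, $I_j=j-\frac{N+1}{2}$, $J_\alpha=\alpha-\frac{M+1}{2}$, and $C_{N,U}=\frac{U}{4}\tan\!\bigl(\frac{\pi}{2}-\frac{\pi}{2N}\bigr)+1$. For a vector $(\mathbf{k},\boldsymbol{\Lambda})=(k_{N/2+1},\dots,k_N,\Lambda_{(M+3)/2},\dots,\Lambda_M)\in\mathbb{R}^{\frac N2+\frac{M-1}{2}}$, extend it to $k_1,\dots,k_N$ and $\Lambda_1,\dots,\Lambda_M$ by $k_j=-k_{N-j+1}$ and $\Lambda_\alpha=-\Lambda_{M-\alpha+1}$ (so $\Lambda_{(M+1)/2}=0$). Define $\phi(\mathbf{k},\boldsymbol{\Lambda})=(\mathbf{k}',\boldsymbol{\Lambda}')$ by: for $\frac{M+3}{2}\le\alpha\le M$, $\Lambda'_\alpha$ is the unique real number with $$\sum_{j=1}^N\theta(2\sin k_j-2\Lambda'_\alpha)=2\pi J_\alpha-\sum_{\beta=1}^M\theta(\Lambda_\alpha-\Lambda_\beta);$$ $k'_{N/2+1}=\max\{0,\tfrac1{N_a}(2\pi I_{N/2+1}+\sum_{\beta=1}^M\theta(2\sin k_{N/2+1}-2\Lambda_\beta))\}$, and for $i>\frac N2+1$, $k'_i=\max\{k'_{i-1},\tfrac1{N_a}(2\pi I_i+\sum_{\beta=1}^M\theta(2\sin k_i-2\Lambda_\beta))\}$. Let $\Omega\subset\mathbb{R}^{\frac N2+\frac{M-1}{2}}$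 be the set defined by $$0\le k_{N/2+1}\le\cdots\le k_N\le\pi,\qquad 0\le\Lambda_{(M+3)/2}\le\cdots\le\Lambda_M\le C_{N,U}.$$ Then $\phi(\Omega)\subset\Omega$.
   Context: Here $\tan^{-1}$ takes values in $(-\pi/2,\pi/2)$. The map $\phi$ is used to find symmetric, ordered solutions of the Lieb–Wu (Bethe Ansatz) equations of the one-dimensional Hubbard model. *)

(* Defs.v *)
From Stdlib Require Import Reals Lra Lia ClassicalEpsilon.
Open Scope R_scope.

Fixpoint sumR (n : nat) (f : nat -> R) : R :=
  match n with
  | O => 0
  | S p => sumR p f + f n
  end.

Definition theta (U x : R) : R := -2 * atan (2 * x / U).

Definition Ij (N j : nat) : R := INR j - (INR N + 1) / 2.
Definition Ja (M a : nat) : R := INR a - (INR M + 1) / 2.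

Definition CNU (N : nat) (U : R) : R :=
  U / 4 * tan (PI / 2 - PI / (2 * INR N)) + 1.

(* A vector (k, Lambda) in R^(N/2 + (M-1)/2) is represented by two functions
   nat -> R, of which only the coordinates k_j, N/2+1 <= j <= N, and
   Lambda_a, (M+3)/2 <= a <= M, are relevant. *)

Definition kext (N : nat) (k : nat -> R) (j : nat) : R :=
  if Nat.leb j (N / 2) then - k (N + 1 - j)%nat else k j.

Definition Lext (M : nat) (L : nat -> R) (a : nat) : R :=
  if Nat.ltb a ((M + 1) / 2) then - L (M + 1 - a)%nat
  else if Nat.eqb a ((M + 1) / 2) then 0 else L a.

Definition Lambda_eq (N M : nat) (U : R) (k L : nat -> R) (a : nat) (x : R) : Prop :=
  sumR N (fun j => theta U (2 * sin (kext N k j) - 2 * x))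
  = 2 * PI * Ja M a - sumR M (fun b => theta U (Lext M L a - Lext M L b)).

Definition Lambda' (N M : nat) (U : R) (k L : nat -> R) (a : nat) : R :=
  epsilon (inhabits 0) (Lambda_eq N M U k L a).

Definition kg (N Na M : nat) (U : R) (k L : nat -> R) (i : nat) : R :=
  (2 * PI * Ij N i
   + sumR M (fun b => theta U (2 * sin (kext N k i) - 2 * Lext M L b))) / INR Na.

(* kp s = k'_(N/2+1+s) *)
Fixpoint kp (N Na M : nat) (U : R) (k L : nat -> R) (s : nat) : R :=
  match s with
  | O => Rmax 0 (kg N Na M U k L (N / 2 + 1))
  | S s' => Rmax (kp N Na M U k L s') (kg N Na M U k L (N / 2 + 1 + s))
  end.

Definition k' (N Na M : nat) (U : R) (k L : nat -> R) (i : nat) : R :=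
  kp N Na M U k L (i - (N / 2 + 1)).

Definition phi (N Na M : nat) (U : R) (v : (nat -> R) * (nat -> R))
  : (nat -> R) * (nat -> R) :=
  (k' N Na M U (fst v) (snd v), Lambda' N M U (fst v) (snd v)).

Definition Omega (N M : nat) (U : R) (v : (nat -> R) * (nat -> R)) : Prop :=
  let k := fst v in let L := snd v in
  (forall j, (N / 2 + 1 <= j <= N)%nat -> 0 <= k j <= PI) /\
  (forall j, (N / 2 + 1 <= j)%nat -> (j < N)%nat -> k j <= k (S j)) /\
  (forall a, ((M + 3) / 2 <= a <= M)%nat -> 0 <= L a <= CNU N U) /\
  (forall a, ((M + 3) / 2 <= a)%nat -> (a < M)%nat -> L a <= L (S a)).

(* Main.v *)
Require Import Defs.
From Stdlib Require Import Reals.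
From Stdlib Require Import Lra Lia ClassicalEpsilon.
Open Scope R_scope.

Lemma sumR_ext_in n f g : (forall j, (1 <= j <= n)%nat -> f j = g j) -> sumR n f = sumR n g.
Proof.
  induction n; simpl; intros H; auto.
  rewrite IHn by (intros; apply H; lia). rewrite H by lia. reflexivity.
Qed.

Lemma sumR_le n f g : (forall j, (1<=j<=n)%nat -> f j <= g j) -> sumR n f <= sumR n g.
Proof.
  induction n; simpl; intros H; [lra|].
  assert (sumR n f <= sumR n g) by (apply IHn; intros; apply H; lia).
  assert (f (S n) <= g (S n)) by (apply H; lia). lra.
Qed.

Lemma sumR_lt n f g : (0 < n)%nat -> (forall j, (1<=j<=n)%nat -> f j < g j) -> sumR n f < sumR n g.
Proof.
  intros Hn H. destruct n; [lia|]. simpl.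
  assert (sumR n f <= sumR n g) by (apply sumR_le; intros; left; apply H; lia).
  assert (f (S n) < g (S n)) by (apply H; lia). lra.
Qed.

Lemma sumR_const n c : sumR n (fun _ => c) = INR n * c.
Proof.
  induction n; [simpl; ring|].
  change (sumR (S n) (fun _ => c)) with (sumR n (fun _ => c) + c).
  rewrite IHn, S_INR; ring.
Qed.

Lemma sumR_plus n f g : sumR n (fun j => f j + g j) = sumR n f + sumR n g.
Proof. induction n; simpl; [ring|]. rewrite IHn; ring. Qed.

Lemma sumR_split n p f : sumR (n+p) f = sumR n f + sumR p (fun j => f (n+j)%nat).
Proof.
  induction p.
  - rewrite Nat.add_0_r; simpl; ring.
  - rewrite Nat.add_succ_r. simpl. rewrite IHp. rewrite Nat.add_succ_r. ring.
Qed.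

Lemma sumR_1 f : sumR 1 f = f 1%nat.
Proof. simpl; ring. Qed.

Lemma sumR_rev n f : sumR n f = sumR n (fun j => f (n+1-j)%nat).
Proof.
  induction n; [reflexivity|].
  change (sumR (S n) f) with (sumR n f + f (S n)).
  change (sumR (S n) (fun j => f (S n + 1 - j)%nat))
    with (sumR (1 + n) (fun j => f (S n + 1 - j)%nat)).
  rewrite sumR_split, sumR_1.
  replace (S n + 1 - 1)%nat with (S n) by lia.
  rewrite IHn.
  rewrite (sumR_ext_in n (fun j => f (n + 1 - j)%nat)
             (fun j => f (S n + 1 - (1 + j))%nat)) by (intros; f_equal; lia).
  ring.
Qed.

Lemma sumR_even m f : sumR (2*m) f = sumR m (fun j => f j + f (2*m+1-j)%nat).
Proof.
  replace (2*m)%nat with (m+m)%nat by lia.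
  rewrite sumR_split, sumR_plus. f_equal.
  rewrite (sumR_rev m (fun j => f (m+j)%nat)).
  apply sumR_ext_in; intros; f_equal; lia.
Qed.

Lemma sumR_odd m f : sumR (2*m+1) f = sumR m (fun j => f j + f (2*m+2-j)%nat) + f (m+1)%nat.
Proof.
  replace (2*m+1)%nat with (m + (1 + m))%nat by lia.
  rewrite sumR_split, sumR_split, sumR_1, sumR_plus.
  rewrite (sumR_rev m (fun j => f (m + (1 + j))%nat)).
  rewrite (sumR_ext_in m (fun j => f (m + (1 + (m + 1 - j)))%nat) (fun j => f (2*m+2-j)%nat))
    by (intros; f_equal; lia).
  ring.
Qed.

Lemma atan_le a b : a <= b -> atan a <= atan b.
Proof. intros [H|H]; [left; apply atan_increasing; auto | subst; lra]. Qed.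

Lemma theta_anti U x y : 0 < U -> x <= y -> theta U y <= theta U x.
Proof.
  intros HU Hxy. unfold theta.
  assert (2 * x / U <= 2 * y / U).
  { unfold Rdiv. apply Rmult_le_compat_r; [left; apply Rinv_0_lt_compat; lra| lra]. }
  apply atan_le in H. lra.
Qed.

Lemma theta_bound U x : - PI < theta U x < PI.
Proof. unfold theta. destruct (atan_bound (2 * x / U)). lra. Qed.

Lemma theta_0 U : theta U 0 = 0.
Proof. unfold theta. replace (2 * 0 / U) with 0 by (unfold Rdiv; ring). rewrite atan_0; ring. Qed.

Lemma atan_pair A B : 0 <= A -> 0 <= atan (A + B) + atan (A - B).
Proof.
  intros HA. assert (atan (B - A) <= atan (A + B)) by (apply atan_le; lra).
  replace (B - A) with (- (A - B)) in H by ring. rewrite atan_opp in H. lra.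
Qed.

Lemma theta_pair U s l : 0 < U -> 0 <= s -> theta U (s + l) + theta U (s - l) <= 0.
Proof.
  intros HU Hs. unfold theta.
  replace (2 * (s + l) / U) with (2 * s / U + 2 * l / U) by (field; lra).
  replace (2 * (s - l) / U) with (2 * s / U - 2 * l / U) by (field; lra).
  assert (0 <= 2 * s / U) by (unfold Rdiv; apply Rmult_le_pos; [lra| left; apply Rinv_0_lt_compat; lra]).
  pose proof (atan_pair (2 * s / U) (2 * l / U) H). lra.
Qed.

Lemma sum_theta_Lext U M m L s c : 0 < U -> 0 <= s -> M = (2*m+1)%nat ->
  sumR M (fun b => theta U (s - c * Lext M L b)) <= 0.
Proof.
  intros HU Hs HM.
  assert (HM2 : ((M+1)/2 = m+1)%nat).
  { subst. replace (2*m+1+1)%nat with ((m+1)*2)%nat by lia. apply Nat.div_mul; lia. }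
  assert (Hmid : Lext M L (m+1) = 0).
  { unfold Lext. rewrite HM2. rewrite (proj2 (Nat.ltb_ge _ _)) by lia.
    rewrite Nat.eqb_refl. reflexivity. }
  rewrite HM at 1. rewrite sumR_odd. rewrite Hmid.
  replace (s - c * 0) with s by ring.
  assert (theta U s <= 0) by (rewrite <- (theta_0 U); apply theta_anti; lra).
  assert (sumR m (fun j => theta U (s - c * Lext M L j) + theta U (s - c * Lext M L (2*m+2-j)%nat))
          <= sumR m (fun _ => 0)).
  { apply sumR_le. intros j Hj.
    assert (E1 : Lext M L j = - L (2*m+2-j)%nat).
    { unfold Lext. rewrite HM2. rewrite (proj2 (Nat.ltb_lt _ _)) by lia.
      f_equal. f_equal. lia. }
    assert (E2 : Lext M L (2*m+2-j)%nat = L (2*m+2-j)%nat).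
    { unfold Lext. rewrite HM2. rewrite (proj2 (Nat.ltb_ge _ _)) by lia.
      rewrite (proj2 (Nat.eqb_neq _ _)) by lia. reflexivity. }
    rewrite E1, E2.
    replace (s - c * - L (2 * m + 2 - j)%nat) with (s + c * L (2 * m + 2 - j)%nat) by ring.
    apply theta_pair; auto. }
  rewrite sumR_const in H0. lra.
Qed.

Definition FF N k U x := sumR N (fun j => theta U (2 * sin (kext N k j) - 2 * x)).

Lemma FF_0 N m k U : 0 < U -> N = (2*m)%nat -> FF N k U 0 <= 0.
Proof.
  intros HU HN. unfold FF.
  assert (HN2 : (N/2 = m)%nat).
  { subst. rewrite Nat.mul_comm. apply Nat.div_mul; lia. }
  rewrite HN at 1. rewrite sumR_even.
  assert (sumR m (fun j => theta U (2 * sin (kext N k j) - 2 * 0) +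
       theta U (2 * sin (kext N k (2 * m + 1 - j)%nat) - 2 * 0)) <= sumR m (fun _ => 0)).
  { apply sumR_le. intros j Hj.
    assert (E1 : kext N k j = - k (2*m+1-j)%nat).
    { unfold kext. rewrite HN2. rewrite (proj2 (Nat.leb_le _ _)) by lia.
      f_equal. f_equal. lia. }
    assert (E2 : kext N k (2*m+1-j)%nat = k (2*m+1-j)%nat).
    { unfold kext. rewrite HN2. rewrite (proj2 (Nat.leb_gt _ _)) by lia. reflexivity. }
    rewrite E1, E2, sin_neg.
    replace (2 * - sin (k (2 * m + 1 - j)%nat) - 2 * 0) with (0 + - (2 * sin (k (2 * m + 1 - j)%nat))) by ring.
    replace (2 * sin (k (2 * m + 1 - j)%nat) - 2 * 0) with (0 - - (2 * sin (k (2 * m + 1 - j)%nat))) by ring.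
    apply theta_pair; lra. }
  rewrite sumR_const in H. lra.
Qed.

Lemma FF_mono N k U x y : 0 < U -> x <= y -> FF N k U x <= FF N k U y.
Proof.
  intros HU Hxy. unfold FF. apply sumR_le. intros j _. apply theta_anti; lra.
Qed.

Lemma FF_lower N k U x : 0 < U -> INR N * theta U (2 - 2 * x) <= FF N k U x.
Proof.
  intros HU. unfold FF. rewrite <- sumR_const. apply sumR_le. intros j _.
  apply theta_anti; auto. pose proof (SIN_bound (kext N k j)). lra.
Qed.

Lemma theta_cont U s : 0 < U -> continuity (fun x => theta U (s - 2 * x)).
Proof.
  intros HU.
  change (fun x => theta U (s - 2 * x)) with
    (comp (fun y => -2 * atan y) (fun x => 2 * (s - 2 * x) / U)).
  apply continuity_comp.
  - apply derivable_continuous. reg.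
  - apply continuity_mult. apply continuity_const. intros a b; reflexivity.
    apply derivable_continuous. intro y. apply derivable_pt_atan.
Qed.

Lemma sum_cont n (h : nat -> R -> R) : (forall j, continuity (h j)) ->
  continuity (fun x => sumR n (fun j => h j x)).
Proof.
  intros H. induction n; simpl.
  - apply continuity_const. intros a b; reflexivity.
  - apply continuity_plus; auto.
Qed.

Lemma FF_cont N k U : 0 < U -> continuity (FF N k U).
Proof.
  intros HU. unfold FF.
  apply (sum_cont N (fun j x => theta U (2 * sin (kext N k j) - 2 * x))).
  intros j. apply theta_cont; auto.
Qed.

Lemma theta_C N U : 0 < U -> (2 <= N)%nat ->
  theta U (2 - 2 * CNU N U) = 2 * (PI / 2 - PI / (2 * INR N)).
Proof.
  intros HU HN. unfold theta, CNU.
  assert (HN' : 2 <= INR N) by (apply (le_INR 2); auto).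
  replace (2 * (2 - 2 * (U / 4 * tan (PI / 2 - PI / (2 * INR N)) + 1)) / U)
    with (- tan (PI / 2 - PI / (2 * INR N))) by (field; lra).
  rewrite atan_opp. rewrite atan_tan. ring.
  pose proof PI_RGT_0.
  set (d := PI / (2 * INR N)).
  assert (d * (2 * INR N) = PI) by (unfold d; field; lra).
  assert (0 < d) by (unfold d; apply Rdiv_lt_0_compat; lra).
  nra.
Qed.

Definition RR M U L a := 2 * PI * Ja M a - sumR M (fun b => theta U (Lext M L a - Lext M L b)).

Lemma lam_part N M U k L m m' : 0 < U -> N = (2*m)%nat -> M = (2*m'+1)%nat -> (2*M <= N)%nat ->
  (forall a, (m'+2 <= a <= M)%nat -> 0 <= L a <= CNU N U) ->
  (forall a, (m'+2 <= a)%nat -> (a < M)%nat -> L a <= L (S a)) ->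
  (forall a, (m'+2 <= a <= M)%nat -> 0 <= Lambda' N M U k L a <= CNU N U) /\
  (forall a, (m'+2 <= a)%nat -> (a < M)%nat -> Lambda' N M U k L a <= Lambda' N M U k L (S a)).
Proof.
  intros HU HN HM HMN HL1 HL2.
  pose proof PI_RGT_0 as HPI.
  assert (HM2 : ((M+1)/2 = m'+1)%nat).
  { subst. replace (2*m'+1+1)%nat with ((m'+1)*2)%nat by lia. apply Nat.div_mul; lia. }
  assert (LextA : forall a, (m'+2 <= a)%nat -> Lext M L a = L a).
  { intros a Ha. unfold Lext. rewrite HM2. rewrite (proj2 (Nat.ltb_ge _ _)) by lia.
    rewrite (proj2 (Nat.eqb_neq _ _)) by lia. reflexivity. }
  assert (HMa : INR M = 2 * INR m' + 1) by (rewrite HM, plus_INR, mult_INR; simpl; ring).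
  assert (HNM : 2 * INR M <= INR N) by (apply le_INR in HMN; rewrite mult_INR in HMN; simpl (INR 2) in HMN; lra).
  assert (R_lo : forall a, (m'+2 <= a <= M)%nat -> 2 * PI <= RR M U L a).
  { intros a Ha. unfold RR, Ja.
    assert (INR (m'+2) <= INR a) by (apply le_INR; lia).
    rewrite plus_INR in H. simpl (INR 2) in H.
    rewrite (sumR_ext_in M _ (fun b => theta U (L a - 1 * Lext M L b)))
      by (intros; rewrite LextA by lia; f_equal; ring).
    assert (sumR M (fun b => theta U (L a - 1 * Lext M L b)) <= 0).
    { apply (sum_theta_Lext U M m' L); auto. apply HL1; lia. }
    nra. }
  assert (R_hi : forall a, (m'+2 <= a <= M)%nat -> RR M U L a < PI * (2 * INR M - 1)).
  { intros a Ha. unfold RR, Ja.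
    assert (INR a <= INR M) by (apply le_INR; lia).
    assert (sumR M (fun _ => - PI) < sumR M (fun b => theta U (Lext M L a - Lext M L b))).
    { apply sumR_lt; [lia|]. intros; apply theta_bound. }
    rewrite sumR_const in H0. nra. }
  assert (R_step : forall a, (m'+2 <= a)%nat -> (a < M)%nat -> RR M U L a + 2 * PI <= RR M U L (S a)).
  { intros a Ha1 Ha2. unfold RR, Ja. rewrite S_INR.
    assert (sumR M (fun b => theta U (Lext M L (S a) - Lext M L b)) <=
            sumR M (fun b => theta U (Lext M L a - Lext M L b))).
    { apply sumR_le. intros j _. apply theta_anti; auto.
      rewrite (LextA a), (LextA (S a)) by lia. specialize (HL2 a Ha1 Ha2). lra. }
    lra. }
  assert (HN2 : (2 <= N)%nat) by lia.
  assert (FC : PI * (INR N - 1) <= FF N k U (CNU N U)).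
  { eapply Rle_trans; [| apply FF_lower; auto]. rewrite theta_C by auto.
    assert (2 <= INR N) by (apply (le_INR 2); auto).
    right. field. lra. }
  assert (F0 : FF N k U 0 <= 0) by (apply (FF_0 N m); auto).
  assert (Hspec : forall a, (m'+2 <= a <= M)%nat -> FF N k U (Lambda' N M U k L a) = RR M U L a).
  { intros a Ha. unfold Lambda'. apply epsilon_spec.
    assert (HC : 0 < CNU N U).
    { destruct (Rlt_le_dec 0 (CNU N U)) as [h|h]; auto.
      pose proof (FF_mono N k U _ _ HU h). specialize (R_lo a Ha). specialize (R_hi a Ha). nra. }
    destruct (IVT (fun x => FF N k U x - RR M U L a) 0 (CNU N U)) as [z [Hz1 Hz2]]; auto.
    - apply continuity_minus. apply FF_cont; auto. apply continuity_const; intros ? ?; reflexivity.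
    - specialize (R_lo a Ha). lra.
    - specialize (R_hi a Ha). nra.
    - exists z. unfold Lambda_eq. change (FF N k U z = RR M U L a). lra. }
  split.
  - intros a Ha. specialize (Hspec a Ha). specialize (R_lo a Ha). specialize (R_hi a Ha).
    split.
    + destruct (Rle_lt_dec 0 (Lambda' N M U k L a)) as [h|h]; auto.
      pose proof (FF_mono N k U _ _ HU (Rlt_le _ _ h)). lra.
    + destruct (Rle_lt_dec (Lambda' N M U k L a) (CNU N U)) as [h|h]; auto.
      pose proof (FF_mono N k U _ _ HU (Rlt_le _ _ h)). nra.
  - intros a Ha1 Ha2.
    destruct (Rle_lt_dec (Lambda' N M U k L a) (Lambda' N M U k L (S a))) as [h|h]; auto.
    pose proof (FF_mono N k U _ _ HU (Rlt_le _ _ h)).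
    rewrite Hspec in H by lia. rewrite Hspec in H by lia.
    specialize (R_step a Ha1 Ha2). lra.
Qed.

Lemma kg_le_pi N Na M U k L m m' i : 0 < U -> N = (2*m)%nat -> M = (2*m'+1)%nat -> (N <= Na)%nat ->
  (2 <= N)%nat -> (forall j, (m+1 <= j <= N)%nat -> 0 <= k j <= PI) ->
  (m+1 <= i <= N)%nat -> kg N Na M U k L i <= PI.
Proof.
  intros HU HN HM HNa HN2 Hk Hi.
  pose proof PI_RGT_0 as HPI.
  assert (HN2' : (N/2 = m)%nat).
  { subst. rewrite Nat.mul_comm. apply Nat.div_mul; lia. }
  unfold kg.
  assert (E : kext N k i = k i).
  { unfold kext. rewrite HN2'. rewrite (proj2 (Nat.leb_gt _ _)) by lia. reflexivity. }
  rewrite E.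
  assert (sumR M (fun b => theta U (2 * sin (k i) - 2 * Lext M L b)) <= 0).
  { apply (sum_theta_Lext U M m' L); auto.
    destruct (Hk i Hi). pose proof (sin_ge_0 (k i) H H0). lra. }
  assert (INR i <= INR N) by (apply le_INR; lia).
  assert (INR N <= INR Na) by (apply le_INR; lia).
  assert (2 <= INR N) by (apply (le_INR 2); lia).
  unfold Ij.
  apply Rmult_le_reg_r with (INR Na); [lra|]. unfold Rdiv.
  rewrite Rmult_assoc, Rinv_l by lra. nra.
Qed.

Lemma kp_ge0 N Na M U k L s : 0 <= kp N Na M U k L s.
Proof.
  induction s; simpl.
  - apply Rmax_l.
  - eapply Rle_trans; [apply IHs | apply Rmax_l].
Qed.

Lemma kp_le_pi N Na M U k L m m' s : 0 < U -> N = (2*m)%nat -> M = (2*m'+1)%nat -> (N <= Na)%nat ->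
  (2 <= N)%nat -> (forall j, (m+1 <= j <= N)%nat -> 0 <= k j <= PI) ->
  (m + 1 + s <= N)%nat -> kp N Na M U k L s <= PI.
Proof.
  intros HU HN HM HNa HN2 Hk.
  assert (HN2' : (N/2 = m)%nat).
  { subst. rewrite Nat.mul_comm. apply Nat.div_mul; lia. }
  pose proof PI_RGT_0 as HPI.
  induction s; intros Hs.
  - change (kp N Na M U k L 0) with (Rmax 0 (kg N Na M U k L (N/2+1))).
    apply Rmax_lub; [lra|]. try rewrite HN2'. apply (kg_le_pi N Na M U k L m m'); auto; lia.
  - change (kp N Na M U k L (S s)) with (Rmax (kp N Na M U k L s) (kg N Na M U k L (N/2+1+S s))).
    apply Rmax_lub; [apply IHs; lia|]. try rewrite HN2'. apply (kg_le_pi N Na M U k L m m'); auto; lia.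
Qed.

Theorem lemma2p1 (N Na M : nat) (U : R) :
  (N <= Na)%nat -> Nat.Even N -> Nat.Odd M -> (M <= N - M)%nat -> 0 < U ->
  forall v : (nat -> R) * (nat -> R),
    Omega N M U v -> Omega N M U (phi N Na M U v).
Proof.
  intros HNa [m HN] [m' HM] HMN HU [k L] [Hk1 [Hk2 [HL1 HL2]]].
  cbn [fst snd] in Hk1, Hk2, HL1, HL2.
  assert (HN2' : (N/2 = m)%nat).
  { subst. rewrite Nat.mul_comm. apply Nat.div_mul; lia. }
  assert (HM3 : ((M+3)/2 = m'+2)%nat).
  { subst. replace (2*m'+1+3)%nat with ((m'+2)*2)%nat by lia. apply Nat.div_mul; lia. }
  rewrite HN2' in Hk1, Hk2. rewrite HM3 in HL1, HL2.
  assert (HN2 : (2 <= N)%nat) by lia.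
  destruct (lam_part N M U k L m m') as [HA HB]; auto; try lia.
  unfold Omega, phi; cbn [fst snd].
  rewrite HN2', HM3.
  split; [|split; [|split]].
  - intros j Hj. unfold k'. rewrite HN2'. split.
    + apply kp_ge0.
    + apply (kp_le_pi N Na M U k L m m'); auto; lia.
  - intros j Hj1 Hj2. unfold k'. rewrite HN2'.
    replace (S j - (m + 1))%nat with (S (j - (m + 1))) by lia.
    change (kp N Na M U k L (S (j - (m + 1))) ) with (Rmax (kp N Na M U k L (j - (m+1))) (kg N Na M U k L (N/2+1+S (j - (m + 1))))).
    apply Rmax_l.
  - exact HA.
  - exact HB.
Qed.
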